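(* Let $G$ be a graph on $V$ and $W\subseteq V$ reducible in $G$. Then for every combinatorial reduction strategy applicable to $G$ whose domain is $W$, the number of applications of the negative rule $\mathrm{gnr}$ in the strategy equals the nullity of $W$ in $G$, namely $|W|-\operatorname{rank}_{\mathbf F_2}(A_{W,W})$. In particular, all such strategies use the same number of negative rules, and every successful strategy (domain $V$) uses exactly $|V|-\operatorname{rank}_{\mathbf F_2}(A)$ negative rules.
   Context: A graph means a finite simple graph in which loops are allowed, with adjacency matrix $A$ over $\mathbf F_2$ ($A_{vv}=1$ iff $v$ has a loop); $A_{W,W}$ is the principal submatrix on $W$. Let $\mathcal V$ be the $\mathbf F_2$-vector space with basis $V$, $\mathcal E(x,y)=x^TAy$, $\langle W\rangle$ the span of $W$, $\langle W\rangle^{\perp\mathcal E}=\{x:\mathcal E(x,w)=0\ \forall w\in\langle W\rangle\}$; $W$ is reducible if $\langle W\rangle+\langle W\rangle^{\perp\mathcal E}=\mathcal V$. Combinatorial reduction rules (domain ordered first, $R$ the principal submatrix on the remaining vertices): $\mathrm{gpr}_v$ applies iff $v$ has a loop, $\begin{pmatrix}1&Q\\Q^T&R\end{pmatrix}\mapsto R-Q^TQ$; $\mathrm{gdr}_{v_1,v_2}$ applies iff $v_1,v_2$ are loopless and adjacent, $\begin{pmatrix}J&Q\\Q^T&R\end{pmatrix}\mapsto R-Q^TJQ$, $J=\begin{pmatrix}0&1\\1&0\end{pmatrix}$; $\mathrm{gnr}_v$ (negative rule) applies iff $v$ is loopless with no neighbors, $\begin{pmatrix}0&\mathbf 0\\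 \mathbf 0^T&R\end{pmatrix}\mapsto R$. A combinatorial reduction strategy is a sequence $(\gamma_1,\dots,\gamma_k)$ of such rules; it is applicable to $G$ if each $\gamma_i$ applies to $\gamma_{i-1}\circ\cdots\circ\gamma_1(G)$; its domain is the set of all vertices removed; it is successful if applicable with domain $V$. *)

(* Defs.v *)
From HB Require Import structures.
From mathcomp Require Import all_boot all_order all_algebra.
Set Implicit Arguments. Unset Strict Implicit. Unset Printing Implicit Defensive.
Import GRing.Theory.
Local Open Scope ring_scope.

(* A graph on the vertex set V = 'I_n (loops allowed) is given by its
   symmetric adjacency matrix A over F_2; A v v = 1 iff v has a loop. *)

Definition unitv (n : nat) (v : 'I_n) : 'rV['F_2]_n := delta_mx 0 v.

Definition spanmx (n : nat) (W : {set 'I_n}) : 'M['F_2]_n :=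
  \matrix_(i < n) (if i \in W then unitv i else 0).

Definition bform (n : nat) (A : 'M['F_2]_n) (x y : 'rV['F_2]_n) : 'F_2 :=
  (x *m A *m y^T) 0 0.

Definition in_perp (n : nat) (A : 'M['F_2]_n) (W : {set 'I_n}) (x : 'rV['F_2]_n) : Prop :=
  forall w : 'rV['F_2]_n, (w <= spanmx W)%MS -> bform A x w = 0.

Definition reducible (n : nat) (A : 'M['F_2]_n) (W : {set 'I_n}) : Prop :=
  forall z : 'rV['F_2]_n, exists x y : 'rV['F_2]_n,
    [/\ (x <= spanmx W)%MS, in_perp A W y & z = x + y].

(* Principal submatrix A_{W,W} (rows/columns indexed by W, in increasing order). *)
Definition submxW (n : nat) (A : 'M['F_2]_n) (W : {set 'I_n}) : 'M['F_2]_#|W| :=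
  mxsub (fun i : 'I_#|W| => enum_val i) (fun j : 'I_#|W| => enum_val j) A.

Inductive rule (n : nat) : Type :=
| Gpr of 'I_n
| Gdr of 'I_n & 'I_n
| Gnr of 'I_n.

Definition is_gnr (n : nat) (r : rule n) : bool :=
  if r is Gnr _ then true else false.

Definition rule_dom (n : nat) (r : rule n) : {set 'I_n} :=
  match r with
  | Gpr v => [set v]
  | Gdr v1 v2 => [set v1; v2]
  | Gnr v => [set v]
  end.

(* A (current) graph: its current vertex set D, and a matrix whose principal
   submatrix on D is the adjacency matrix (entries outside D are irrelevant). *)
Definition state (n : nat) : Type := ({set 'I_n} * 'M['F_2]_n)%type.

Definition apply_rule (n : nat) (r : rule n) (G : state n) : option (state n) :=
  let: (D, M) := G in
  match r with
  | Gpr v =>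
      if (v \in D) && (M v v == 1) then
        Some (D :\ v, \matrix_(x, y) (M x y - M v x * M v y))
      else None
  | Gdr v1 v2 =>
      if [&& v1 \in D, v2 \in D, v1 != v2, M v1 v1 == 0, M v2 v2 == 0 & M v1 v2 == 1]
      then Some (D :\ v1 :\ v2,
                 \matrix_(x, y) (M x y - (M v1 x * M v2 y + M v2 x * M v1 y)))
      else None
  | Gnr v =>
      if (v \in D) && (M v v == 0) && [forall u in D, (u != v) ==> (M v u == 0)]
      then Some (D :\ v, M)
      else None
  end.

Fixpoint run (n : nat) (s : seq (rule n)) (G : state n) : option (state n) :=
  match s with
  | [::] => Some G
  | r :: s' => match apply_rule r G with
               | Some G' => run s' G'
               | None => None
               end
  end.

Definition graph_state (n : nat) (A : 'M['F_2]_n) : state n := (setT, A).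

Definition applicable (n : nat) (A : 'M['F_2]_n) (s : seq (rule n)) : Prop :=
  run s (graph_state A) <> None.

Definition strat_dom (n : nat) (s : seq (rule n)) : {set 'I_n} :=
  \bigcup_(r <- s) rule_dom r.

Definition successful (n : nat) (A : 'M['F_2]_n) (s : seq (rule n)) : Prop :=
  applicable A s /\ strat_dom s = setT.

(* Main.v *)
Require Import Defs.
From HB Require Import structures.
From mathcomp Require Import all_boot all_order all_algebra.
From Stdlib Require Import Lia.
Set Implicit Arguments. Unset Strict Implicit. Unset Printing Implicit Defensive.
Import GRing.Theory.
Local Open Scope ring_scope.

Lemma pivot_rank (F : fieldType) (n k : nat) (N : 'M[F]_n) (E : 'M[F]_(k, n)) (Q : 'M[F]_k) :
  Q *m (E *m N *m E^T) = 1%:M -> (E *m N *m E^T) *m Q = 1%:M ->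
  \rank N = (\rank (N - N *m (E^T *m Q *m E) *m N)%R + k)%N.
Proof.
set P := E *m N *m E^T => hQP hPQ.
set K := N - _.
set r := E *m N.
have hKE : K *m E^T = 0.
  rewrite /K mulmxBl.
  have -> : N *m (E^T *m Q *m E) *m N *m E^T = N *m E^T *m (Q *m P).
    by rewrite /P !mulmxA.
  by rewrite hQP mulmx1 subrr.
have hN : (N == K + r)%MS.
  apply/andP; split.
    have -> : N = K + (N *m E^T *m Q) *m r.
      by rewrite /K /r !mulmxA subrK.
    apply: addmx_sub; first exact: addsmxSl.
    exact: submx_trans (submxMl _ _) (addsmxSr _ _).
  rewrite addsmx_sub; apply/andP; split; last exact: submxMl.
  have -> : K = (1%:M - N *m E^T *m Q *m E) *m N.
    by rewrite /K mulmxBl mul1mx !mulmxA.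
  exact: submxMl.
have hr : \rank r = k.
  apply/eqP; rewrite eqn_leq rank_leq_row /=.
  have h1 : (\rank (P *m Q) <= \rank r)%N.
    apply: leq_trans (mxrankM_maxl _ _) _.
    exact: mxrankM_maxl.
  by rewrite hPQ mxrank1 in h1.
have hcap : \rank (K :&: r)%MS = 0%N.
  apply/eqP; rewrite mxrank_eq0.
  have [D hD] := submxP (capmxSr K r).
  have hX : (K :&: r)%MS *m E^T = 0.
    apply/eqP; rewrite -submx0; apply: submx_trans (submxMr E^T (capmxSl K r)) _; rewrite hKE; exact: sub0mx.
  have hD0 : D = 0.
    have : D *m P = 0 by rewrite -hX hD /P /r !mulmxA.
    by move=> h; rewrite -[D]mulmx1 -hPQ mulmxA h mul0mx.
  by rewrite hD hD0 mul0mx.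
have := mxrank_sum_cap K r.
by rewrite hcap addn0 hr -(eqmx_rank hN) => ->.
Qed.
Notation F2 := 'F_2.

Definition mask (n : nat) (M : 'M[F2]_n) (T : {set 'I_n}) : 'M[F2]_n :=
  \matrix_(i, j) (if (i \in T) && (j \in T) then M i j else 0).

Lemma NdN (n : nat) (N : 'M[F2]_n) (a b : 'I_n) :
  N *m delta_mx a b *m N = \matrix_(x, y) (N x a * N b y).
Proof.
rewrite -(mul_delta_mx (0 : 'I_1)) !mulmxA -colE -mulmxA -rowE.
apply/matrixP => x y; rewrite !mxE big_ord1 !mxE //.
Qed.

Lemma dNd (n : nat) (N : 'M[F2]_n) (a b : 'I_n) :
  delta_mx 0 a *m N *m delta_mx b 0 = (N a b)%:M :> 'M[F2]_1.
Proof.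
rewrite -colE -rowE; apply/matrixP => i j; rewrite !mxE.
by rewrite !ord1 eqxx mulr1n.
Qed.

Lemma scal0 (k : nat) : (0 : F2)%:M = 0 :> 'M[F2]_k.
Proof. by apply/matrixP => i j; rewrite !mxE mul0rn. Qed.

Lemma symE (n : nat) (M : 'M[F2]_n) : M^T = M -> forall x y, M x y = M y x.
Proof. by move=> h x y; rewrite -{1}h mxE. Qed.

Lemma mask_sym (n : nat) (M : 'M[F2]_n) T : M^T = M -> (mask M T)^T = mask M T.
Proof. by move=> h; apply/matrixP => i j; rewrite !mxE (symE h) andbC. Qed.

Lemma mask_gpr (n : nat) (M : 'M[F2]_n) (T : {set 'I_n}) v : M^T = M -> v \in T -> M v v = 1 ->
  mask (\matrix_(x, y) (M x y - M v x * M v y)) (T :\ v)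
  = mask M T - mask M T *m delta_mx v v *m mask M T.
Proof.
move=> sM vT Mvv; rewrite NdN; apply/matrixP => x y; rewrite !mxE !in_setD1 vT /=.
case: (x =P v) => [->|xv]; case: (y =P v) => [->|yv] /=; rewrite ?vT ?Mvv /=.
- by rewrite mul1r subrr.
- by case: (y \in T) => /=; rewrite ?mul1r ?subrr ?mul0r ?subr0.
- by case: (x \in T) => /=; rewrite ?mulr1 ?(symE sM x v) ?subrr ?mul0r ?subr0.
- case: (x \in T); case: (y \in T) => /=; rewrite ?mxE ?(symE sM x v) ?mulr0 ?mul0r ?subr0 //.
Qed.

Lemma mask_gdr (n : nat) (M : 'M[F2]_n) (T : {set 'I_n}) v1 v2 : M^T = M ->
  v1 \in T -> v2 \in T -> v1 != v2 -> M v1 v1 = 0 -> M v2 v2 = 0 -> M v1 v2 = 1 ->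
  mask (\matrix_(x, y) (M x y - (M v1 x * M v2 y + M v2 x * M v1 y))) (T :\ v1 :\ v2)
  = mask M T - mask M T *m (delta_mx v2 v1 + delta_mx v1 v2) *m mask M T.
Proof.
move=> sM v1T v2T v12 M11 M22 M12.
have M21 : M v2 v1 = 1 by rewrite (symE sM).
rewrite mulmxDr mulmxDl !NdN; apply/matrixP => x y; rewrite !mxE !in_setD1 v1T v2T /=.
have [->|xv1] := eqVneq x v1; have [->|yv1] := eqVneq y v1;
  rewrite ?eqxx ?(negbTE v12) ?(eq_sym v2 v1) ?(negbTE v12) /= ?v1T ?v2T /=
    ?M11 ?M22 ?M12 ?M21 ?mul0r ?mulr0 ?mul1r ?mulr1 ?add0r ?addr0 ?subrr //.
all: try (have [->|xv2] := eqVneq x v2); try (have [->|yv2] := eqVneq y v2);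
  rewrite ?eqxx ?(negbTE v12) ?(eq_sym v2 v1) ?(negbTE v12) /= ?v1T ?v2T /=
    ?M11 ?M22 ?M12 ?M21 ?mul0r ?mulr0 ?mul1r ?mulr1 ?add0r ?addr0 ?subrr //.
all: try (case: (x \in T)); try (case: (y \in T)); rewrite /= ?M11 ?M22 ?M12 ?M21 ?mul0r ?mulr0 ?mul1r ?mulr1 ?add0r ?addr0 ?subrr ?subr0 //.
all: rewrite ?oppr0 //.
by rewrite [M v1 x](symE sM) [M v2 x](symE sM) [X in _ - X = _]addrC.
Qed.

Lemma mask_gnr (n : nat) (M : 'M[F2]_n) (D S : {set 'I_n}) v : M^T = M ->
  M v v = 0 -> [forall u in D, (u != v) ==> (M v u == 0)] ->
  mask M ((D :&: S) :\ v) = mask M (D :&: S).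
Proof.
move=> sM Mvv /forall_inP hu.
have hz : forall y, y \in D -> M v y = 0.
  move=> y yD; have [->//|yv] := eqVneq y v.
  by apply/eqP; apply: (implyP (hu y yD)).
apply/matrixP => x y; rewrite !mxE !in_setD1.
have [->|xv] := eqVneq x v; have [->|yv] := eqVneq y v => //=;
  rewrite ?andbF ?Mvv; try by case: ifP.
- by case: ifP => // /andP [_ /setIP[yD _]]; rewrite hz.
- by case: ifP => // /andP [/setIP[xD _] _]; rewrite (symE sM) hz.
Qed.

Definition rk (n : nat) (M : 'M[F2]_n) (T : {set 'I_n}) : nat := \rank (mask M T).

Lemma rk_gpr (n : nat) (M : 'M[F2]_n) (T : {set 'I_n}) v : M^T = M -> v \in T -> M v v = 1 ->
  rk M T = addn (rk (\matrix_(x, y) (M x y - M v x * M v y)) (T :\ v)) 1.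
Proof.
move=> sM vT Mvv; rewrite /rk mask_gpr //.
have hP : delta_mx (0 : 'I_1) v *m mask M T *m (delta_mx (0 : 'I_1) v)^T = 1%:M :> 'M[F2]_1.
  by rewrite trmx_delta dNd mxE vT Mvv.
have hZ : (delta_mx (0 : 'I_1) v)^T *m 1%:M *m delta_mx (0 : 'I_1) v = delta_mx v v :> 'M[F2]_n.
  by rewrite trmx_delta mulmx1 mul_delta_mx.
have := @pivot_rank _ _ 1 (mask M T) (delta_mx (0 : 'I_1) v) (1%:M).
rewrite hZ hP ?mul1mx ?mulmx1; by apply.
Qed.

Lemma rk_gdr (n : nat) (M : 'M[F2]_n) (T : {set 'I_n}) v1 v2 : M^T = M ->
  v1 \in T -> v2 \in T -> v1 != v2 -> M v1 v1 = 0 -> M v2 v2 = 0 -> M v1 v2 = 1 ->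
  rk M T = addn (rk (\matrix_(x, y) (M x y - (M v1 x * M v2 y + M v2 x * M v1 y))) (T :\ v1 :\ v2)) 2.
Proof.
move=> sM v1T v2T v12 M11 M22 M12.
have M21 : M v2 v1 = 1 by rewrite (symE sM).
rewrite /rk mask_gdr //.
set E : 'M[F2]_(1 + 1, n) := col_mx (delta_mx 0 v1) (delta_mx 0 v2).
set Q : 'M[F2]_(1 + 1) := block_mx 0 1%:M 1%:M 0.
have hZ : E^T *m Q *m E = delta_mx v2 v1 + delta_mx v1 v2.
  rewrite /E /Q tr_col_mx !trmx_delta mul_row_block !mulmx0 !mulmx1 !add0r !addr0.
  by rewrite mul_row_col !mul_delta_mx.
have hP : E *m mask M T *m E^T = Q.
  rewrite /E /Q tr_col_mx !trmx_delta mul_col_mx mul_col_row !dNd !mxE.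
  by rewrite v1T v2T /= M11 M22 M12 M21 scal0.
have hQQ : Q *m Q = 1%:M.
  rewrite /Q mulmx_block !mulmx0 !mul0mx !mulmx1 !add0r !addr0.
  by rewrite [RHS]scalar_mx_block.
have := @pivot_rank _ _ (1+1) (mask M T) E Q.
by rewrite hZ hP; apply.
Qed.

Lemma setID1 (n : nat) (D S : {set 'I_n}) v : (D :\ v) :&: S = (D :&: S) :\ v.
Proof. by apply/setP => x; rewrite !inE; case: (x == v); case: (x \in D); case: (x \in S). Qed.

Lemma step_inv (n : nat) (r : rule n) D M D1 M1 (S : {set 'I_n}) :
  M^T = M -> apply_rule r (D, M) = Some (D1, M1) -> rule_dom r \subset S ->
  [/\ M1^T = M1, D1 = D :\: rule_dom r &
   (rk M (D :&: S) + is_gnr r + #|D1 :&: S| = #|D :&: S| + rk M1 (D1 :&: S))%N].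
Proof.
move=> sM; case: r => [v|v1 v2|v] /=.
- case: ifP => // /andP [vD /eqP Mvv] [<- <-]; rewrite sub1set => vS.
  split => //.
    by apply/matrixP => x y; rewrite !mxE (symE sM y x) [M v y * _]mulrC.
  have vT : v \in D :&: S by rewrite inE vD.
  rewrite setID1 (rk_gpr sM vT Mvv) (cardsD1 v (D :&: S)) vT.
  by rewrite addn0 -addnA addnC.
- case: ifP => // /and5P [v1D v2D v12 /eqP M11 /andP [/eqP M22 /eqP M12]] [<- <-].
  rewrite subUset !sub1set => /andP [v1S v2S].
  split => //.
  + apply/matrixP => x y; rewrite !mxE (symE sM y x) [M v1 y * _]mulrC [M v2 y * _]mulrC.
    by rewrite [X in _ - X = _]addrC.
  + by apply/setP => x; rewrite !inE negb_or; case: (x == v1); case: (x == v2); case: (x \in D).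
  + have v1T : v1 \in D :&: S by rewrite inE v1D.
    have v2T : v2 \in D :&: S by rewrite inE v2D.
    rewrite !setID1 (rk_gdr sM v1T v2T v12 M11 M22 M12).
    rewrite (cardsD1 v1 (D :&: S)) v1T (cardsD1 v2 ((D :&: S) :\ v1)) !inE eq_sym v12 v2D v2S /=.
    by rewrite ?addn0 -addnA addnC.
- case: ifP => // /andP [/andP [vD /eqP Mvv] hu] [<- <-]; rewrite sub1set => vS.
  split => //.
  have vT : v \in D :&: S by rewrite inE vD.
  rewrite setID1 /rk (mask_gnr S sM Mvv hu) (cardsD1 v (D :&: S)) vT.
  by rewrite ?addn0 -addnA addnC.
Qed.

Lemma run_cons (n : nat) (r : rule n) s G :
  run (r :: s) G = match apply_rule r G with Some G' => run s G' | None => None end.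
Proof. by []. Qed.

Lemma run_inv (n : nat) (S : {set 'I_n}) (s : seq (rule n)) :
  forall D M D' M', M^T = M -> run s (D, M) = Some (D', M') -> strat_dom s \subset S ->
  D' = D :\: strat_dom s /\
  (rk M (D :&: S) + count (@is_gnr n) s + #|D' :&: S| = #|D :&: S| + rk M' (D' :&: S))%N.
Proof.
elim: s => [|r s IH] D M D' M' sM.
  move=> /= [<- <-] _; rewrite /strat_dom big_nil setD0; split => //.
  by rewrite addn0 addnC.
rewrite run_cons; case eq1: (apply_rule r (D, M)) => [[D1 M1]|] // hrun.
rewrite /strat_dom big_cons -/(strat_dom s) subUset => /andP [hr hs].
have [sM1 eD1 h1] := step_inv sM eq1 hr.
have [eD' h2] := IH D1 M1 D' M' sM1 hrun hs.
split; first by rewrite eD' eD1 setDDl.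
move: h1 h2; set a := rk M _; set b := #|D1 :&: S|; set c := #|D :&: S|; set x := rk M1 _.
set d := #|D' :&: S|; set y := rk M' _; set g := nat_of_bool _; set k := count _ _.
have -> : count (@is_gnr n) (r :: s) = (g + k)%N by []. rewrite -!plusE => h1 h2; lia.
Qed.

Lemma sum_delta (m : nat) (a : 'I_m) (f : 'I_m -> F2) :
  \sum_(l < m) (a == l)%:R * f l = f a.
Proof.
rewrite (bigD1 a) //= eqxx mul1r big1 ?addr0 // => l /negbTE.
by rewrite eq_sym => ->; rewrite mul0r.
Qed.

Lemma sum_deltaW (n : nat) (W : {set 'I_n}) (x : 'I_n) (f : 'I_n -> F2) :
  \sum_(z in W) (z == x)%:R * f z = if x \in W then f x else 0.
Proof.
rewrite big_mkcond /=.
rewrite (eq_bigr (fun z => (x == z)%:R * (if z \in W then f z else 0))).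
  by rewrite sum_delta.
move=> z _; rewrite eq_sym; case: (z \in W) => //; by rewrite mulr0.
Qed.

Lemma sumW (n : nat) (W : {set 'I_n}) (F : 'I_n -> F2) :
  \sum_(i < #|W|) F (enum_val i) = \sum_(z in W) F z.
Proof. exact: (esym (big_enum_val _)). Qed.

Lemma rank_submxW (n : nat) (A : 'M[F2]_n) (W : {set 'I_n}) :
  \rank (submxW A W) = rk A W.
Proof.
set P : 'M[F2]_(#|W|, n) := \matrix_(i, j) (enum_val i == j)%:R.
have hPX : forall p (X : 'M[F2]_(n, p)) i l, (P *m X) i l = X (enum_val i) l.
  by move=> p X i l; rewrite mxE (eq_bigr (fun m => (enum_val i == m)%:R * X m l))
     ?sum_delta // => m _; rewrite mxE.
have ha : submxW A W = P *m mask A W *m P^T.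
  apply/matrixP => i j; rewrite !mxE.
  rewrite (eq_bigr (fun l => (enum_val j == l)%:R * (P *m mask A W) i l)).
    by rewrite sum_delta hPX mxE !enum_valP.
  by move=> l _; rewrite !mxE mulrC.
have hb : mask A W = P^T *m submxW A W *m P.
  apply/matrixP => x y; rewrite !mxE.
  rewrite (eq_bigr (fun j => (\sum_(i < #|W|) (enum_val i == x)%:R * A (enum_val i) (enum_val j)) * (enum_val j == y)%:R)); last first.
    move=> j _; congr (_ * _); last by rewrite mxE.
    by rewrite mxE; apply: eq_bigr => i _; rewrite !mxE.
  rewrite (sumW W (fun z => (\sum_(i < #|W|) (enum_val i == x)%:R * A (enum_val i) z) * (z == y)%:R)).
  rewrite (eq_bigr (fun z => (z == y)%:R * (if x \in W then A x z else 0))); last first.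
    move=> z _; rewrite mulrC; congr (_ * _).
    by rewrite (sumW W (fun w => (w == x)%:R * A w z)) sum_deltaW.
  rewrite sum_deltaW; case: (x \in W); case: (y \in W) => //=.
rewrite /rk; apply/eqP; rewrite eqn_leq; apply/andP; split.
  rewrite ha; apply: leq_trans (mxrankM_maxl _ _) _; exact: mxrankM_maxr.
rewrite hb; apply: leq_trans (mxrankM_maxl _ _) _; exact: mxrankM_maxr.
Qed.

Lemma rk_set0 (n : nat) (M : 'M[F2]_n) : rk M set0 = 0%N.
Proof.
rewrite /rk (_ : mask M set0 = 0) ?mxrank0 //.
by apply/matrixP => i j; rewrite !mxE inE.
Qed.

Lemma rk_setT (n : nat) (M : 'M[F2]_n) : rk M setT = \rank M.
Proof.
by rewrite /rk (_ : mask M setT = M) //; apply/matrixP => i j; rewrite !mxE !inE.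
Qed.

Lemma main_gen (n : nat) (A : 'M[F2]_n) (symA : A^T = A) (W : {set 'I_n})
  (s : seq (rule n)) : applicable A s -> strat_dom s = W ->
  count (@is_gnr n) s = (#|W| - rk A W)%N.
Proof.
move=> hap hdom; rewrite /applicable /graph_state in hap.
case e: (run s (setT, A)) hap => [[D' M']|] // _.
have hsub : strat_dom s \subset W by rewrite hdom.
have [eD h] := run_inv symA e hsub.
move: h; rewrite hdom in eD; rewrite setTI.
have -> : D' :&: W = set0 by rewrite eD; apply/setP => x; rewrite !inE; case: (x \in W).
by rewrite rk_set0 cards0 !addn0 => <-; rewrite addKn.
Qed.

Theorem mainTheorem12 (n : nat) (A : 'M['F_2]_n) (symA : A^T = A)
    (W : {set 'I_n}) (redW : reducible A W) :
  (forall s : seq (rule n), applicable A s -> strat_dom s = W ->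
     count (@is_gnr n) s = (#|W| - \rank (submxW A W))%N) /\
  (forall s : seq (rule n), successful A s ->
     count (@is_gnr n) s = (n - \rank A)%N).
Proof.
split.
  by move=> s hap hdom; rewrite rank_submxW; apply: main_gen.
move=> s [hap hdom]; rewrite (main_gen symA hap hdom) rk_setT.
by rewrite cardsT card_ord.
Qed.
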